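(* Let $\Theta=\{\theta_1,\dots,\theta_N\}$ be a finite set of $N\ge 1$ distinct elements, and let $PES(\Theta)=\{A_{ij} : i=0,\dots,N;\ j=1,\dots,P(N,i)\}$ be its permutation event space, where $P(N,i)=\frac{N!}{(N-i)!}$. For $i\ge 0$ let $F(i)=\sum_{k=0}^{i}P(i,k)=\sum_{k=0}^{i}\frac{i!}{(i-k)!}$, and set $S=\sum_{i=1}^{N}P(N,i)\,(F(i)-1)$. Consider the entropy $$H_{RPS}(\mathscr{M})=-\sum_{i=1}^{N}\sum_{j=1}^{P(N,i)}\mathscr{M}(A_{ij})\log\left(\frac{\mathscr{M}(A_{ij})}{F(i)-1}\right)$$ as a function on the set of all permutation mass functions $\mathscr{M}$ on $PES(\Theta)$. Then $H_{RPS}(\mathscr{M})$ attains its maximum value if and only if $$\mathscr{M}(A_{ij})=\frac{F(i)-1}{S}\quad\text{for all } i=1,\dots,N,\ j=1,\dots,P(N,i).$$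
   Context: The permutation event space $PES(\Theta)$ is the set of all ordered tuples of distinct elements of $\Theta$ (including the empty tuple $\emptyset=A_{01}$): for each $i\in\{0,\dots,N\}$, the tuples of length $i$ are enumerated as $A_{i1},\dots,A_{i,P(N,i)}$, e.g. for $\Theta=\{\theta_1,\theta_2\}$, $PES(\Theta)=\{\emptyset,(\theta_1),(\theta_2),(\theta_1,\theta_2),(\theta_2,\theta_1)\}$. A permutation mass function (PMF) is a map $\mathscr{M}:PES(\Theta)\to[0,1]$ with $\mathscr{M}(\emptyset)=0$ and $\sum_{A\in PES(\Theta)}\mathscr{M}(A)=1$. The logarithm has a fixed base $b>1$, and the convention $0\log 0=0$ is used. *)

(* Defs.v *)
From HB Require Import structures.
From mathcomp Require Import all_boot all_order all_algebra.
From mathcomp Require Import reals exp.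
Set Implicit Arguments. Unset Strict Implicit. Unset Printing Implicit Defensive.
Import Order.TTheory GRing.Theory Num.Theory.
Local Open Scope ring_scope.

(* Permutation event space of a finite set T (with N = #|T|):
   all ordered tuples of distinct elements of T, of every length i = 0..N. *)
Definition PES (T : finType) : finType :=
  {i : 'I_(#|T|).+1 & {t : i.-tuple T | uniq t}}.

Definition pes_len (T : finType) (a : PES T) : nat := nat_of_ord (tag a).

Definition Pnk (n k : nat) : nat := n ^_ k.
Definition Fi (i : nat) : nat := (\sum_(k < i.+1) Pnk i k)%N.
Definition Ssum (N : nat) : nat := (\sum_(1 <= i < N.+1) Pnk N i * (Fi i - 1))%N.

Definition logb (R : realType) (b x : R) : R := ln x / ln b.

Definition is_PMF (R : realType) (T : finType) (M : PES T -> R) : Prop :=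
  [/\ forall a, 0 <= M a <= 1,
      forall a, pes_len a = 0%N -> M a = 0
    & \sum_(a : PES T) M a = 1].

(* H_RPS, with the convention 0 log 0 = 0 made explicit *)
Definition H_RPS (R : realType) (b : R) (T : finType) (M : PES T -> R) : R :=
  - \sum_(a : PES T | (0 < pes_len a)%N)
      (if M a == 0 then 0
       else M a * logb b (M a / ((Fi (pes_len a))%:R - 1))).

(* Main.v *)
Require Import Defs.
From HB Require Import structures.
From mathcomp Require Import all_boot all_order all_algebra.
From mathcomp Require Import reals exp.
From mathcomp Require Import ring lra zify.
Import Order.TTheory GRing.Theory Num.Theory.
Local Open Scope ring_scope.

Lemma card_tag (T : finType) (i : 'I_(#|T|).+1) :
  #|[pred a : PES T | tag a == i]| = (#|T| ^_ i)%N.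
Proof.
pose f := fun x : {t : i.-tuple T | uniq t} =>
  (Tagged (fun j : 'I_(#|T|).+1 => {t : j.-tuple T | uniq t}) x : PES T).
have finj : injective f by move=> x y H; exact: eq_from_Tagged H.
have -> : #|[pred a : PES T | tag a == i]| = #|f @: predT|.
  apply: eq_card => a; rewrite inE /=.
  apply/idP/imsetP.
    case: a => j t /= /eqP Ej; subst j. by exists t.
  by case=> x _ ->.
rewrite (card_imset predT finj) card_sig.
have -> : (#|T| ^_ i)%N = #|[set t : i.-tuple T | all predT t & uniq t]|.
  by rewrite card_uniq_tuples.
apply: eq_card => t; rewrite !inE /=.
by rewrite all_predT.
Qed.

Lemma Fi_ge2 i : (0 < i)%N -> (2 <= Fi i)%N.
Proof.
case: i => // i _; rewrite /Fi big_ord_recl big_ord_recl /Pnk /= ffactn0 ffactn1.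
set s := (\sum_(_ < _) _)%N. lia.
Qed.

Lemma W_eq (R : realType) (T : finType) :
  \sum_(a : PES T | (0 < pes_len a)%N) ((Fi (pes_len a))%:R - 1 : R)
  = (Ssum #|T|)%:R.
Proof.
pose w' (i : nat) : R := if (0 < i)%N then (Fi i)%:R - 1 else 0.
rewrite big_mkcond /=.
transitivity (\sum_(a : PES T) w' (tag a)); first by apply: eq_bigr.
rewrite (partition_big (fun a : PES T => tag a) predT) //=.
transitivity (\sum_(i < #|T|.+1) w' i *+ (#|T| ^_ i)).
  apply: eq_bigr => i _.
  transitivity (\sum_(a : PES T | true && (tag a == i)) w' i).
    by apply: eq_bigr => a /eqP ->.
  rewrite sumr_const -(@card_tag T i); congr (_ *+ _); exact: eq_card.
rewrite big_ord_recl /= /w' /= add0r /Ssum natr_sum big_add1 /= big_mkord.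
apply: eq_bigr => i _ /=.
rewrite natrM natrB; last by have := @Fi_ge2 i.+1 (ltn0Sn i); lia.
by rewrite mulr_natl.
Qed.

Lemma ln_le1 {R : realType} (x : R) : 0 < x -> ln x <= x - 1.
Proof.
move=> x0; have := @le_ln1Dx R (x - 1).
rewrite [1 + _]addrC subrK; apply; lra.
Qed.

Lemma ln_lt1 {R : realType} (x : R) : 0 < x -> x != 1 -> ln x < x - 1.
Proof.
move=> x0 x1; have := @expR_gt1Dx R (ln x).
rewrite lnK ?posrE // ln_eq0 // => /(_ x1); lra.
Qed.

Lemma pmf_ge0 (R : realType) (T : finType) (M : PES T -> R) :
  is_PMF M -> forall a, 0 <= M a.
Proof. by case=> h _ _ a; case/andP: (h a). Qed.

Section Main.
Variables (R : realType) (T : finType).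

Definition w (a : PES T) : R := (Fi (pes_len a))%:R - 1.
Definition W : R := \sum_(a : PES T | (0 < pes_len a)%N) w a.

Lemma w_gt0 a : (0 < pes_len a)%N -> 0 < w a.
Proof.
move/Fi_ge2; rewrite /w -(ler_nat R) => h; lra.
Qed.

Lemma W_Ssum : W = (Ssum #|T|)%:R.
Proof. exact: W_eq. Qed.

Lemma W_gt0 : (0 < #|T|)%N -> 0 < W.
Proof.
move=> hN; rewrite W_Ssum ltr0n /Ssum big_ltn //.
have := @Fi_ge2 1 isT; rewrite /Pnk ffactn1; nia.
Qed.

Definition fterm (M : PES T -> R) a : R :=
  if M a == 0 then 0 else M a * ln (w a / (W * M a)).

Hypothesis hN : (0 < #|T|)%N.

Lemma f_le M a : (0 < pes_len a)%N -> 0 <= M a -> fterm M a <= w a / W - M a.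
Proof.
move=> Pa m0; have wp := w_gt0 a Pa; have Wp := W_gt0 hN.
rewrite /fterm; case: eqP => [->|/eqP mn0].
  rewrite subr0; apply: divr_ge0; lra.
have mp : 0 < M a by rewrite lt0r mn0.
have xp : 0 < w a / (W * M a) by apply: divr_gt0 => //; apply: mulr_gt0.
apply: le_trans (ler_wpM2l (ltW mp) (ln_le1 _ xp)) _.
rewrite le_eqVlt; apply/orP; left; apply/eqP; field; rewrite ?gt_eqF //; lra.
Qed.

Lemma f_eq M a : (0 < pes_len a)%N -> 0 <= M a ->
  fterm M a = w a / W - M a -> M a = w a / W.
Proof.
move=> Pa m0; have wp := w_gt0 a Pa; have Wp := W_gt0 hN.
have wWp : 0 < w a / W by apply: divr_gt0.
rewrite /fterm; case: eqP => [->|/eqP mn0]; first lra.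
have mp : 0 < M a by rewrite lt0r mn0.
have xp : 0 < w a / (W * M a) by apply: divr_gt0 => //; apply: mulr_gt0.
have [x1|x1] := eqVneq (w a / (W * M a)) 1.
  move=> _; move: x1; rewrite invfM mulrA => /(congr1 (fun y => y * M a)).
  by rewrite mul1r mulfVK ?gt_eqF.
have h := ltr_pM2l mp; move: (ln_lt1 _ xp x1); rewrite -h => {}h.
have e2 : M a * (w a / (W * M a) - 1) = w a / W - M a.
  by field; rewrite ?gt_eqF //; lra.
rewrite e2 in h; move=> e; move: h; rewrite e; lra.
Qed.

Lemma f_star M a : (0 < pes_len a)%N -> M a = w a / W -> fterm M a = 0.
Proof.
move=> Pa e; have wp := w_gt0 a Pa; have Wp := W_gt0 hN.
rewrite /fterm e; case: eqP => // _.
have -> : w a / (W * (w a / W)) = 1 by field; rewrite ?gt_eqF.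
by rewrite ln1 mulr0.
Qed.

Lemma sumP_M (M : PES T -> R) : is_PMF M -> \sum_(a : PES T | (0 < pes_len a)%N) M a = 1.
Proof.
case=> _ h0 h1; rewrite -h1 [RHS](bigID (fun a : PES T => (0 < pes_len a)%N)) /=.
rewrite [X in _ = _ + X]big1 ?addr0 // => a; rewrite lt0n negbK => /eqP; exact: h0.
Qed.

Lemma key (M : PES T -> R) (b : R) : 1 < b -> is_PMF M ->
  ln b * H_RPS b M = ln W + \sum_(a : PES T | (0 < pes_len a)%N) fterm M a.
Proof.
move=> hb hM; have Wp := W_gt0 hN; have lb : 0 < ln b by apply: ln_gt0.
have [hM01 _ _] := hM.
rewrite -[ln W]mulr1 -(sumP_M _ hM) mulr_sumr -big_split /= /H_RPS mulrN mulr_sumr.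
rewrite -sumrN; apply: eq_bigr => a Pa.
have wp := w_gt0 a Pa.
rewrite /fterm; case: eqP => [->|/eqP mn0]; first by rewrite mulr0 oppr0 mulr0 add0r.
have mp : 0 < M a by rewrite lt0r mn0; case/andP: (hM01 a).
rewrite /logb -/(w a) ln_div ?posrE // ln_div ?posrE ?mulr_gt0 // lnM ?posrE //.
field; rewrite gt_eqF //.
Qed.

Lemma sum_g (M : PES T -> R) : is_PMF M ->
  \sum_(a : PES T | (0 < pes_len a)%N) (w a / W - M a) = 0.
Proof.
move=> hM; have Wp := W_gt0 hN.
rewrite sumrB (sumP_M _ hM) -mulr_suml divff ?gt_eqF // subrr //.
Qed.

Lemma upper (M : PES T -> R) (b : R) : 1 < b -> is_PMF M ->
  ln b * H_RPS b M <= ln W.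
Proof.
move=> hb hM; rewrite (key _ _ hb hM) -[X in _ <= X]addr0 lerD2l -[X in _ <= X](sum_g _ hM).
apply: ler_sum => a Pa; apply: f_le => //; exact: pmf_ge0 hM a.
Qed.

Lemma w_le_W a : (0 < pes_len a)%N -> w a <= W.
Proof.
move=> Pa; rewrite /W (bigD1 a) //= lerDl; apply: sumr_ge0 => i /andP[Pi _].
exact: ltW (w_gt0 i Pi).
Qed.

End Main.

Theorem theorem3 (R : realType) (b : R) (T : finType)
  (hb : 1 < b) (hN : (0 < #|T|)%N) (M : PES T -> R) (hM : is_PMF M) :
  (forall M' : PES T -> R, is_PMF M' -> H_RPS b M' <= H_RPS b M) <->
  (forall a : PES T, (1 <= pes_len a)%N ->
     M a = ((Fi (pes_len a))%:R - 1) / (Ssum #|T|)%:R).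
Proof.
have Wp := W_gt0 R T hN; have lb : 0 < ln b by apply: ln_gt0.
rewrite -(W_Ssum R T).
split=> [Hmax a Pa|Hc M' hM'].
  pose Ms (a : PES T) : R := if (0 < pes_len a)%N then w R T a / W R T else 0.
  have hMs : is_PMF Ms.
    split.
    - move=> x; rewrite /Ms; case: ifP => Px; last by rewrite lexx ler01.
      have := @w_gt0 R T x Px; have := @w_le_W R T x Px => h1 h2.
      rewrite divr_ge0 ?(ltW h2) ?(ltW Wp) //= ler_pdivrMr // mul1r; exact: h1.
    - by move=> x; rewrite /Ms => ->.
    - rewrite -big_mkcond /= -mulr_suml divff // gt_eqF //.
  have hs : ln b * H_RPS b Ms = ln (W R T).
    rewrite (@key _ _ hN _ _ hb hMs) big1 ?addr0 // => x Px; apply: f_star => //.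
    by rewrite /Ms Px.
  have h1 := Hmax _ hMs.
  rewrite -(ler_pM2l lb) hs (@key _ _ hN _ _ hb hM) -[X in X <= _]addr0 lerD2l in h1.
  have hg := @sum_g _ _ hN _ hM.
  have hz : \sum_(x : PES T | (0 < pes_len x)%N) (w R T x / W R T - M x - fterm R T M x) = 0.
    apply/eqP; rewrite eq_le; apply/andP; split.
      rewrite sumrB hg; lra.
    apply: sumr_ge0 => x Px; rewrite subr_ge0; apply: f_le => //.
    exact: pmf_ge0 hM x.
  have hge : forall x : PES T, (0 < pes_len x)%N ->
      0 <= w R T x / W R T - M x - fterm R T M x.
    move=> x Px; rewrite subr_ge0; apply: f_le => //.
    exact: pmf_ge0 hM x.
  have e := psumr_eq0P hge hz Pa.
  have -> : (Fi (pes_len a))%:R - 1 = w R T a by [].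
  apply: (@f_eq _ _ hN _ _ Pa); first exact: pmf_ge0 hM a.
  by apply/eqP; rewrite eq_sym -subr_eq0; apply/eqP; exact: e.
rewrite -(ler_pM2l lb); apply: le_trans (@upper _ _ hN _ _ hb hM') _.
rewrite (@key _ _ hN _ _ hb hM) big1 ?addr0 // => x Px; apply: f_star => //.
exact: Hc.
Qed.
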